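(* Let $\Lambda=\{a_1<\dots<a_m\}$ be finite with $m\ge4$. A certainty preserving PAF $\psi:\mathcal P^N\to\mathcal P$ is both Level-SP and $L_1^{\mathcal P}$-SP if and only if it is dictatorial, i.e. there is $i\in N$ with $\psi(\mathbf p)=p_i$ for all $\mathbf p$.
   Context: $N=\{1,\dots,n\}$; $\mathcal P$ is the set of probability distributions on $\Lambda$, identified with vectors $(p(a_1),\dots,p(a_m))$; $\mathcal C$ the CDFs, $\pi(p)(a)=p(\{x\le a\})$. A PAF is a map $\psi:\mathcal P^N\to\mathcal P$ with associated CAF $\Psi$ given by $\Psi(\pi(p_1),\dots,\pi(p_n))=\pi(\psi(p_1,\dots,p_n))$; $P_i=\pi(p_i)$. $\mathbf z_{-i}(z_i')$ is $\mathbf z$ with $i$-th coordinate replaced by $z_i'$. $\psi$ is Level-SP if for every $i$, $\mathbf P$, $P_i'$, $a$: $P_i(a)<\Psi(\mathbf P)(a)\Rightarrow\Psi(\mathbf P)(a)\le\Psi(\mathbf P_{-i}(P_i'))(a)$ and $P_i(a)>\Psi(\mathbf P)(a)\Rightarrow\Psi(\mathbf P)(a)\ge\Psi(\mathbf P_{-i}(P_i'))(a)$. $\psi$ is $L_1^{\mathcal P}$-SP if for all $i$, $\mathbf p\in\mathcal P^N$, $p_i'\in\mathcal P$: $\|\psi(\mathbf p)-p_i\|_1\le\|\psi(\mathbf p_{-i}(p_i'))-p_i\|_1$, where $\|p-q\|_1=\sum_{k=1}^m|p(a_k)-q(a_k)|$. $\psi$ is certainty preserving if for every profile $\mathbf p$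 and $A\subseteq\Lambda$, $p_i(A)=1$ for all $i$ implies $\psi(\mathbf p)(A)=1$. *)

(* Defs.v *)
(* Lambda = 'I_m (a_1 < ... < a_m identified with 0 < ... < m-1),
   N = 'I_n, reals = an arbitrary realType R. *)
From mathcomp Require Import all_boot all_order all_algebra.
From mathcomp Require Import reals.
Set Implicit Arguments. Unset Strict Implicit. Unset Printing Implicit Defensive.
Import Order.TTheory GRing.Theory Num.Theory.
Local Open Scope ring_scope.

Definition is_prob (R : realType) (m : nat) (p : 'I_m -> R) : Prop :=
  (forall k, 0 <= p k) /\ \sum_(k < m) p k = 1.

Record prob (R : realType) (m : nat) := Prob {
  pval :> 'I_m -> R;
  pvalP : is_prob pval }.

Definition probA (R : realType) m (p : prob R m) (A : {set 'I_m}) : R :=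
  \sum_(k in A) p k.

Definition cdf (R : realType) m (p : prob R m) (a : 'I_m) : R :=
  \sum_(k < m | (k <= a)%N) p k.

Definition upd (T : Type) n (z : 'I_n -> T) (i : 'I_n) (z' : T) : 'I_n -> T :=
  fun j => if j == i then z' else z j.

Definition PAF (R : realType) n m := ('I_n -> prob R m) -> prob R m.

(* Level-SP, stated via the associated CAF Psi(pi p_1,...,pi p_n) = pi(psi p) *)
Definition level_SP (R : realType) n m (psi : PAF R n m) : Prop :=
  forall (i : 'I_n) (p : 'I_n -> prob R m) (pi' : prob R m) (a : 'I_m),
    (cdf (p i) a < cdf (psi p) a -> cdf (psi p) a <= cdf (psi (upd p i pi')) a) /\
    (cdf (p i) a > cdf (psi p) a -> cdf (psi p) a >= cdf (psi (upd p i pi')) a).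

Definition L1dist (R : realType) m (p q : 'I_m -> R) : R :=
  \sum_(k < m) `|p k - q k|.

Definition L1_SP (R : realType) n m (psi : PAF R n m) : Prop :=
  forall (i : 'I_n) (p : 'I_n -> prob R m) (pi' : prob R m),
    L1dist (psi p) (p i) <= L1dist (psi (upd p i pi')) (p i).

Definition certainty_preserving (R : realType) n m (psi : PAF R n m) : Prop :=
  forall (p : 'I_n -> prob R m) (A : {set 'I_m}),
    (forall i, probA (p i) A = 1) -> probA (psi p) A = 1.

Definition dictatorial (R : realType) n m (psi : PAF R n m) : Prop :=
  exists i : 'I_n, forall p : 'I_n -> prob R m, psi p = p i.

(* Main.v *)
Require Import Defs.
From mathcomp Require Import all_boot all_order all_algebra.
From mathcomp Require Import reals lra zify.
From Stdlib Require Import Lia.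
From Stdlib Require Import Classical ProofIrrelevance FunctionalExtensionality.
Set Implicit Arguments. Unset Strict Implicit. Unset Printing Implicit Defensive.
Import Order.TTheory GRing.Theory Num.Theory.
Local Open Scope ring_scope.

Definition cdfn (R : realType) m (p : prob R m) (j : nat) : R :=
  \sum_(k < m | (k <= j)%N) p k.

Lemma prob_ge0 (R : realType) m (p : prob R m) k : 0 <= p k.
Proof. by case: p => f [h1 h2]; apply: h1. Qed.

Lemma prob_sum (R : realType) m (p : prob R m) : \sum_(k < m) p k = 1.
Proof. by case: p => f [h1 h2]; apply: h2. Qed.

Lemma prob_ext (R : realType) m (p q : prob R m) :
  (forall k, p k = q k) -> p = q.
Proof.
case: p q => f hf [g hg] /= e.
have efg : f = g by apply: functional_extensionality.
subst g; congr Prob; apply: proof_irrelevance.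
Qed.

Lemma cdfn_ge0 (R : realType) m (p : prob R m) j : 0 <= cdfn p j.
Proof. by apply: sumr_ge0 => k _; apply: prob_ge0. Qed.

Lemma cdfn_le1 (R : realType) m (p : prob R m) j : cdfn p j <= 1.
Proof.
rewrite -(prob_sum p) /cdfn [X in _ <= X](bigID (fun k : 'I_m => (k <= j)%N)) /=.
rewrite lerDl; apply: sumr_ge0 => k _; apply: prob_ge0.
Qed.

Lemma cdfn_big (R : realType) m (p : prob R m) j : (m <= j.+1)%N -> cdfn p j = 1.
Proof.
move=> h; rewrite -(prob_sum p) /cdfn; apply: eq_bigl => k.
by have := ltn_ord k; lia.
Qed.

Lemma massE (R : realType) m (p : prob R m) (k : 'I_m) :
  p k = cdfn p k - (if k == 0%N :> nat then 0 else cdfn p k.-1).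
Proof.
rewrite /cdfn (bigD1 k) //=.
case: ifP => hk.
  rewrite big_pred0 ?subr0 ?addr0 // => i.
  by apply/negbTE; rewrite negb_and -val_eqE /= (eqP hk); lia.
rewrite (eq_bigl (fun i : 'I_m => (i <= k.-1)%N)) ?addrK // => i.
by rewrite -val_eqE /=; move/negbT: hk; lia.
Qed.

Lemma sum_leS (R : realType) m (g : nat -> R) j :
  \sum_(k < m | (k <= j.+1)%N) g k =
  \sum_(k < m | (k <= j)%N) g k + (if (j.+1 < m)%N then g j.+1 else 0).
Proof.
case: ifP => h.
  rewrite (bigD1 (Ordinal h)) //= addrC; congr (_ + _); apply: eq_bigl => k.
  by rewrite -val_eqE /=; lia.
rewrite addr0; apply: eq_bigl => k; have := ltn_ord k; move/negbT: h; lia.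
Qed.

Lemma sum_le0 (R : realType) m (g : nat -> R) :
  \sum_(k < m.+1 | (k <= 0)%N) g k = g 0%N.
Proof.
rewrite (bigD1 ord0) //= big_pred0 ?addr0 // => k.
by apply/negbTE; rewrite negb_and -val_eqE /=; lia.
Qed.

Definition c01 (R : realType) (v : R) : R := if v < 0 then 0 else if 1 < v then 1 else v.
Definition rmax (R : realType) (a b : R) : R := if a <= b then b else a.
Definition zA (R : realType) (y0 : R) := c01 y0.
Definition zB (R : realType) (y0 y1 : R) := rmax (zA y0) (c01 y1).
Definition zC (R : realType) (y0 y1 y2 : R) := rmax (zB y0 y1) (c01 y2).

Lemma c01_bnd (R : realType) (v : R) : 0 <= c01 v <= 1.
Proof. rewrite /c01; repeat case: ifP => ?; apply/andP; split; lra. Qed.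

Lemma c01_id (R : realType) (v : R) : 0 <= v <= 1 -> c01 v = v.
Proof. move=> /andP[h1 h2]; rewrite /c01; repeat case: ifP => ?; lra. Qed.

Lemma rmax_l (R : realType) (a b : R) : a <= rmax a b.
Proof. by rewrite /rmax; case: ifP => // ?; lra. Qed.
Lemma rmax_r (R : realType) (a b : R) : b <= rmax a b.
Proof. by rewrite /rmax; case: ifP => h; lra. Qed.
Lemma rmax_le (R : realType) (a b c : R) : a <= c -> b <= c -> rmax a b <= c.
Proof. by rewrite /rmax; case: ifP. Qed.
Lemma rmax_id (R : realType) (a b : R) : a <= b -> rmax a b = b.
Proof. by rewrite /rmax => ->. Qed.

Lemma z_bnd (R : realType) (y0 y1 y2 : R) :
  [/\ 0 <= zA y0, zA y0 <= zB y0 y1, zB y0 y1 <= zC y0 y1 y2 & zC y0 y1 y2 <= 1].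
Proof.
have h0 := c01_bnd y0; have h1 := c01_bnd y1; have h2 := c01_bnd y2.
move: h0 h1 h2 => /andP[? ?] /andP[? ?] /andP[? ?].
split; rewrite /zC /zB /zA; first by [].
- exact: rmax_l.
- exact: rmax_l.
- by repeat apply: rmax_le.
Qed.

Lemma z_id (R : realType) (y0 y1 y2 : R) :
  0 <= y0 -> y0 <= y1 -> y1 <= y2 -> y2 <= 1 ->
  [/\ zA y0 = y0, zB y0 y1 = y1 & zC y0 y1 y2 = y2].
Proof.
move=> h0 h1 h2 h3.
have e0 : zA y0 = y0 by rewrite /zA c01_id //; apply/andP; split; lra.
have e1 : zB y0 y1 = y1 by rewrite /zB e0 c01_id ?rmax_id //; apply/andP; split; lra.
split => //; by rewrite /zC e1 c01_id ?rmax_id //; apply/andP; split; lra.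
Qed.

Definition wn (R : realType) (M : nat) (y0 y1 y2 : R) (j : nat) : R :=
  if j == 0%N then zA y0
  else if j == 1%N then zB y0 y1 - zA y0
  else if j == 2%N then zC y0 y1 y2 - zB y0 y1
  else if j == M.+3 then 1 - zC y0 y1 y2 else 0.

Definition cdfw (R : realType) (M : nat) (y0 y1 y2 : R) (j : nat) : R :=
  if j == 0%N then zA y0
  else if j == 1%N then zB y0 y1
  else if (j <= M.+2)%N then zC y0 y1 y2 else 1.

Lemma wn_sum (R : realType) (M : nat) (y0 y1 y2 : R) j :
  \sum_(k < M.+4 | (k <= j)%N) wn M y0 y1 y2 k = cdfw M y0 y1 y2 j.
Proof.
elim: j => [|j IH]; first by rewrite sum_le0 /wn /cdfw.
rewrite sum_leS IH /wn /cdfw.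
case: (z_bnd y0 y1 y2); move: (zA y0) (zB y0 y1) (zC y0 y1 y2) => a b c ? ? ? ?.
rewrite /=; repeat case: ifP => ?; try lra; exfalso; lia.
Qed.

Lemma wn_ge0 (R : realType) (M : nat) (y0 y1 y2 : R) j : 0 <= wn M y0 y1 y2 j.
Proof.
rewrite /wn; case: (z_bnd y0 y1 y2); move: (zA y0) (zB y0 y1) (zC y0 y1 y2) => a b c ? ? ? ?.
repeat case: ifP => ?; lra.
Qed.

Lemma mk4_prob (R : realType) (M : nat) (y0 y1 y2 : R) :
  is_prob (fun k : 'I_M.+4 => wn M y0 y1 y2 k).
Proof.
split; first by move=> k; apply: wn_ge0.
rewrite (eq_bigl (fun k : 'I_M.+4 => (k <= M.+3)%N)); last first.
  by move=> k; have := ltn_ord k; lia.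
by rewrite wn_sum /cdfw; repeat case: ifP => ?; try lia.
Qed.

Definition mk4 (R : realType) (M : nat) (y0 y1 y2 : R) : prob R M.+4 :=
  Prob (mk4_prob M y0 y1 y2).

Lemma cdfn_mk4 (R : realType) (M : nat) (y0 y1 y2 : R) j :
  cdfn (mk4 M y0 y1 y2) j = cdfw M y0 y1 y2 j.
Proof. exact: wn_sum. Qed.

Lemma upd_eq (T : Type) n (z : 'I_n -> T) i v : upd z i v i = v.
Proof. by rewrite /upd eqxx. Qed.
Lemma upd_neq (T : Type) n (z : 'I_n -> T) i j v : j != i -> upd z i v j = z j.
Proof. by rewrite /upd => /negbTE ->. Qed.
Lemma upd_same (T : Type) n (z : 'I_n -> T) i : upd z i (z i) = z.
Proof. by apply: functional_extensionality => j; rewrite /upd; case: eqP => [->|]. Qed.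
Lemma upd_upd (T : Type) n (z : 'I_n -> T) i v w : upd (upd z i v) i w = upd z i w.
Proof. by apply: functional_extensionality => j; rewrite /upd; case: eqP. Qed.
Lemma upd_comm (T : Type) n (z : 'I_n -> T) i j v w : i != j ->
  upd (upd z i v) j w = upd (upd z j w) i v.
Proof.
move=> hij; apply: functional_extensionality => k; rewrite /upd.
have [-> | hkj] := eqVneq k j.
  by rewrite ?eqxx; case: eqP => // h; rewrite h eqxx in hij.
by case: eqP.
Qed.

Lemma coord_ind (T : Type) n (Q : ('I_n -> T) -> Prop) (x y : 'I_n -> T) :
  Q x -> (forall z j, Q z -> Q (upd z j (y j))) -> Q y.
Proof.
move=> Qx step.
pose z k := fun j : 'I_n => if (j < k)%N then y j else x j.
have H : forall k, (k <= n)%N -> Q (z k).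
  elim=> [|k IH] hk.
    have -> : z 0%N = x by apply: functional_extensionality.
    exact: Qx.
  have hk' : (k < n)%N by [].
  have -> : z k.+1 = upd (z k) (Ordinal hk') (y (Ordinal hk')).
    apply: functional_extensionality => j; rewrite /z /upd -val_eqE /=.
    case: eqP => [hkj|hne].
      have -> : Ordinal hk' = j by apply: val_inj.
      by rewrite hkj ltnSn.
    by rewrite ltnS leq_eqVlt; case: eqP.
  by apply: step; apply: IH; apply: ltnW.
have -> : y = z n by apply: functional_extensionality => j; rewrite /z ltn_ord.
exact: H.
Qed.

Lemma inv1 (R : realType) n m (psi : PAF R n m) (hL : level_SP psi) i P q a :
  cdf q a = cdf (P i) a -> cdf (psi (upd P i q)) a = cdf (psi P) a.
Proof.
move=> hq.
have [A1 A2] := hL i P q a.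
have [B1 B2] := hL i (upd P i q) (P i) a.
rewrite upd_upd upd_same upd_eq hq in B1 B2.
set G := cdf (psi P) a in A1 A2 B1 B2 *.
set G' := cdf (psi (upd P i q)) a in A1 A2 B1 B2 *.
set x := cdf (P i) a in A1 A2 B1 B2 *.
case: (ltrgtP x G) => h1.
- have := A1 h1; move=> h2; have := B1 (lt_le_trans h1 h2); lra.
- have := A2 h1; move=> h2; have := B2 (le_lt_trans h2 h1); lra.
- case: (ltrgtP x G') => h2.
  + have := B1 h2; lra.
  + have := B2 h2; lra.
  + lra.
Qed.

Lemma cdf_ge0 (R : realType) m (p : prob R m) a : 0 <= cdf p a.
Proof. exact: cdfn_ge0. Qed.
Lemma cdf_le1 (R : realType) m (p : prob R m) a : cdf p a <= 1.
Proof. exact: cdfn_le1. Qed.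

Definition tp (R : realType) M (v : R) := mk4 M v v v.

Lemma rmax_aa (R : realType) (a : R) : rmax a a = a.
Proof. by rewrite /rmax lexx. Qed.

Lemma cdf_mk4 (R : realType) M (y0 y1 y2 : R) (a : 'I_M.+4) :
  cdf (mk4 M y0 y1 y2) a = cdfw M y0 y1 y2 a.
Proof. exact: cdfn_mk4. Qed.

Lemma cdf_tp (R : realType) M (v : R) (a : 'I_M.+4) :
  (a < M.+3)%N -> cdf (tp M v) a = c01 v.
Proof.
move=> ha; rewrite /tp cdf_mk4 /cdfw /zC /zB /zA !rmax_aa.
by repeat case: ifP => ? //; exfalso; lia.
Qed.

Lemma probA_one (R : realType) m (p : prob R m) (A : {set 'I_m}) :
  (forall k, k \notin A -> p k = 0) -> probA p A = 1.
Proof.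
move=> h; rewrite /probA -(prob_sum p) [RHS](bigID (mem A)) /=.
by rewrite [X in _ = _ + X]big1 ?addr0 // => k /h.
Qed.

Lemma probA_zero (R : realType) m (p : prob R m) (A : {set 'I_m}) :
  probA p A = 1 -> forall k, k \notin A -> p k = 0.
Proof.
move=> h k hk.
have e : \sum_(k | k \notin A) p k = 0.
  have := prob_sum p; rewrite (bigID (mem A)) /=.
  rewrite /probA in h; rewrite h; lra.
by apply: (psumr_eq0P _ e) => // j _; apply: prob_ge0.
Qed.

Lemma supp_psi (R : realType) n m (psi : PAF R n m) (hC : certainty_preserving psi)
  (P : 'I_n -> prob R m) (A : {set 'I_m}) :
  (forall i k, k \notin A -> P i k = 0) -> forall k, k \notin A -> psi P k = 0.
Proof.
move=> h; apply: probA_zero; apply: hC => i; apply: probA_one => k; exact: h.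
Qed.

Definition A0L M : {set 'I_M.+4} := [set k : 'I_M.+4 | (k == 0 :> nat) || (k == M.+3 :> nat)].

Lemma tp_supp (R : realType) M (v : R) k : k \notin A0L M -> tp M v k = 0.
Proof.
rewrite inE negb_or => /andP [h0 h3].
rewrite /tp /mk4 /= /wn /zC /zB /zA !rmax_aa (negbTE h0) (negbTE h3).
by repeat case: ifP => _; rewrite ?subrr.
Qed.

Lemma cdf_supp0 (R : realType) M (p : prob R M.+4) (a : 'I_M.+4) :
  (forall k, k \notin A0L M -> p k = 0) -> (a < M.+3)%N -> cdf p a = p ord0.
Proof.
move=> h ha; rewrite /cdf (bigD1 ord0) //= big1 ?addr0 // => k /andP [hka hk0].
apply: h; rewrite inE negb_or -val_eqE /= in hk0 *; rewrite hk0 /=; lia.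
Qed.

Definition Phi (R : realType) n M (psi : PAF R n M.+4) (x : 'I_n -> R) : R :=
  cdf (psi (fun k => tp M (x k))) ord0.

Lemma tp_level (R : realType) n M (psi : PAF R n M.+4) (hC : certainty_preserving psi)
  x (a : 'I_M.+4) :
  (a < M.+3)%N -> cdf (psi (fun k => tp M (x k))) a = Phi psi x.
Proof.
move=> ha.
have hs := supp_psi hC (fun i k hk => tp_supp (x i) hk).
by rewrite /Phi !(cdf_supp0 hs).
Qed.

Lemma phi_rep (R : realType) n M (psi : PAF R n M.+4) (hL : level_SP psi)
  (hC : certainty_preserving psi) P (a : 'I_M.+4) :
  (a < M.+3)%N -> cdf (psi P) a = Phi psi (fun k => cdf (P k) a).
Proof.
move=> ha; set v := fun k => cdf (P k) a.
rewrite -(tp_level hC v ha).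
pose Q := fun z : 'I_n -> prob R M.+4 =>
  (forall j, cdf (z j) a = cdf (P j) a) /\ cdf (psi z) a = cdf (psi P) a.
have : Q (fun k => tp M (v k)).
  apply: (coord_ind (x := P)) => [|z j [h1 h2]]; first by split.
  split.
    move=> j'; rewrite /upd; case: eqP => // ->.
    rewrite cdf_tp // c01_id //; apply/andP; split; [exact: cdf_ge0 | exact: cdf_le1].
  rewrite inv1 // h1 cdf_tp // c01_id //; apply/andP; split; [exact: cdf_ge0 | exact: cdf_le1].
by case=> _ ->.
Qed.

Definition clampR (R : realType) (v lo hi g : R) :=
  [/\ lo <= g, g <= hi, (v < g -> g = lo) & (g < v -> g = hi)].
Definition unitv (R : realType) n (x : 'I_n -> R) := forall k, 0 <= x k <= 1.

Lemma tp_upd (R : realType) n M (x : 'I_n -> R) i v :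
  upd (fun k => tp M (x k)) i (tp M v) = (fun k => tp M (upd x i v k)).
Proof. by apply: functional_extensionality => k; rewrite /upd; case: eqP. Qed.

Lemma c01_0 (R : realType) : c01 (0 : R) = 0.
Proof. by apply: c01_id; rewrite lexx ler01. Qed.
Lemma c01_1 (R : realType) : c01 (1 : R) = 1.
Proof. by apply: c01_id; rewrite lexx ler01. Qed.

Lemma phi_clamp (R : realType) n M (psi : PAF R n M.+4) (hL : level_SP psi) x i :
  unitv x -> clampR (x i) (Phi psi (upd x i 0)) (Phi psi (upd x i 1)) (Phi psi x).
Proof.
move=> ux.
set P := fun k => tp M (x k).
have c0 : forall v : R, cdf (tp M v) (@ord0 M.+3) = c01 v by move=> v; rewrite cdf_tp.
have eL : Phi psi (upd x i 0) = cdf (psi (upd P i (tp M 0))) ord0 by rewrite /P tp_upd.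
have eU : Phi psi (upd x i 1) = cdf (psi (upd P i (tp M 1))) ord0 by rewrite /P tp_upd.
have eG : Phi psi x = cdf (psi P) ord0 by [].
have xi : cdf (P i) ord0 = x i by rewrite /P c0 c01_id.
have [A1 _] := hL i P (tp M 0) ord0.
have [_ A2] := hL i P (tp M 1) ord0.
have [B1 _] := hL i (upd P i (tp M 0)) (P i) ord0.
have [_ B2] := hL i (upd P i (tp M 1)) (P i) ord0.
rewrite !upd_upd !upd_same !upd_eq ?xi !c0 c01_0 c01_1 ?(c01_id (ux i)) in A1 A2 B1 B2.
rewrite eL eU eG.
have g0 := cdf_ge0 (psi P) ord0.
have u1 := cdf_le1 (psi (upd P i (tp M 1))) ord0.
have l0 := cdf_ge0 (psi (upd P i (tp M 0))) ord0.
have g1 := cdf_le1 (psi P) ord0.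
move: A1 A2 B1 B2 g0 u1 l0 g1.
set G := cdf (psi P) ord0; set L := cdf _ ord0; set U := cdf _ ord0.
move=> A1 A2 B1 B2 g0 u1 l0 g1.
have hLG : L <= G by case: (ltrgtP 0 L) => h; [apply: B1 | lra | lra].
have hGU : G <= U by case: (ltrgtP U 1) => h; [apply: B2 | lra | lra].
split=> // h; [have := A1 h | have := A2 h]; lra.
Qed.

Lemma phi_const0 (R : realType) n M (psi : PAF R n M.+4) (hC : certainty_preserving psi) :
  Phi psi (fun _ => 0) = 0.
Proof.
pose A : {set 'I_M.+4} := [set k : 'I_M.+4 | k == M.+3 :> nat].
have hs : forall k, k \notin A -> psi (fun _ => tp M 0) k = 0.
  apply: supp_psi => // i k; rewrite inE => hk.
  rewrite /tp /mk4 /= /wn /zC /zB /zA !rmax_aa c01_0 (negbTE hk).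
  by repeat case: ifP => _; rewrite ?subrr.
rewrite /Phi (cdf_supp0 (p := psi (fun _ => tp M 0))) //.
  by apply: hs; rewrite inE.
move=> k; rewrite inE negb_or => /andP[_ hk]; apply: hs; by rewrite inE.
Qed.

Lemma phi_const1 (R : realType) n M (psi : PAF R n M.+4) (hC : certainty_preserving psi) :
  Phi psi (fun _ => 1) = 1.
Proof.
pose A : {set 'I_M.+4} := [set k : 'I_M.+4 | k == 0 :> nat].
have hA : probA (psi (fun _ => tp M 1)) A = 1.
  apply: hC => i; apply: probA_one => k; rewrite inE => hk.
  rewrite /tp /mk4 /= /wn /zC /zB /zA !rmax_aa c01_1 (negbTE hk).
  by repeat case: ifP => _; rewrite ?subrr.
have hs := probA_zero hA.
rewrite /Phi (cdf_supp0 (p := psi (fun _ => tp M 1))) //; last first.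
  by move=> k; rewrite inE negb_or => /andP[hk _]; apply: hs; rewrite inE.
have e : probA (psi (fun _ => tp M 1)) A = psi (fun _ => tp M 1) ord0.
  by rewrite /probA (big_pred1 ord0) // => k; rewrite inE /= -val_eqE.
by rewrite -e.
Qed.

Lemma clamp_uniq (R : realType) (v l h g g' : R) :
  clampR v l h g -> clampR v l h g' -> g = g'.
Proof.
case=> a1 a2 a3 a4 [b1 b2 b3 b4].
case: (ltrgtP v g) => h1; case: (ltrgtP v g') => h2;
  first [ have e1 := a3 h1 | have e1 := a4 h1 | have e1 := erefl g ];
  first [ have e2 := b3 h2 | have e2 := b4 h2 | have e2 := erefl g ]; lra.
Qed.

Lemma unitv_upd (R : realType) n (x : 'I_n -> R) i v :
  unitv x -> 0 <= v <= 1 -> unitv (upd x i v).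
Proof. by move=> ux hv k; rewrite /upd; case: eqP. Qed.

Lemma in01_0 (R : realType) : (0 : R) <= (0 : R) <= 1.
Proof. by rewrite lexx ler01. Qed.
Lemma in01_1 (R : realType) : (0 : R) <= (1 : R) <= 1.
Proof. by rewrite lexx ler01. Qed.


Lemma stepA (R : realType) n (F : ('I_n -> R) -> R)
  (K1 : forall x i, unitv x -> clampR (x i) (F (upd x i 0)) (F (upd x i 1)) (F x))
  (K3 : forall x i j, unitv x -> i != j ->
    ~ (F (upd (upd x i 0) j 0) < F (upd (upd x i 1) j 0) /\
       F (upd (upd x i 0) j 0) < F (upd (upd x i 0) j 1)) /\
    ~ (F (upd (upd x i 1) j 0) < F (upd (upd x i 1) j 1) /\
       F (upd (upd x i 0) j 1) < F (upd (upd x i 1) j 1)))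
  x i j v :
  unitv x -> i != j -> 0 <= v <= 1 -> F (upd x i 0) < F (upd x i 1) ->
  F (upd (upd x j v) i 0) = F (upd x i 0) /\ F (upd (upd x j v) i 1) = F (upd x i 1).
Proof.
move=> ux hij hv hlt.
have ji : j != i by rewrite eq_sym.
have u0 := unitv_upd i ux (in01_0 R).
have u1 := unitv_upd i ux (in01_1 R).
have Clo := K1 _ j u0; have Chi := K1 _ j u1.
rewrite !upd_neq // in Clo Chi.
have Cab := K1 _ i (unitv_upd j ux (in01_0 R)).
have Ccd := K1 _ i (unitv_upd j ux (in01_1 R)).
rewrite ?upd_upd !(upd_comm _ _ _ ji) in Cab Ccd.
have [N1 N2] := K3 x i j ux hij.
move: Clo Chi Cab Ccd N1 N2 hlt.
set a := F (upd (upd x i 0) j 0); set b := F (upd (upd x i 1) j 0).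
set c := F (upd (upd x i 0) j 1); set d := F (upd (upd x i 1) j 1).
set lo := F (upd x i 0); set hi := F (upd x i 1).
move=> Clo Chi Cab Ccd N1 N2 hlt.
have [h1 h2 _ _] := Cab; have [h3 h4 _ _] := Ccd.
have [h5 h6 _ _] := Clo; have [h7 h8 _ _] := Chi.
have eac : a = c.
  case: (ltrgtP a c) => // hac; last by lra.
  have eab : a = b by case: (ltrgtP a b) => // hab; [exfalso; apply: N1 | lra].
  have ecd : c = d by case: (ltrgtP c d) => // hcd; [exfalso; apply: N2; split; lra | lra].
  rewrite -eab -ecd in Chi.
  have := clamp_uniq Clo Chi; lra.
have ebd : b = d.
  case: (ltrgtP b d) => // hbd; last by lra.
  have ecd : c = d by case: (ltrgtP c d) => // hcd; [exfalso; apply: N2 | lra].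
  lra.
have G0 := K1 (upd (upd x i 0) j v) j (unitv_upd j u0 hv).
have G1 := K1 (upd (upd x i 1) j v) j (unitv_upd j u1 hv).
rewrite !upd_upd -/a -/b -/c -/d in G0 G1.
rewrite !(upd_comm _ _ _ ji).
case: G0 => g1 g2 _ _; case: G1 => g3 g4 _ _.
split; lra.
Qed.

Lemma dict_comb (R : realType) n (F : ('I_n -> R) -> R)
  (K1 : forall x i, unitv x -> clampR (x i) (F (upd x i 0)) (F (upd x i 1)) (F x))
  (K20 : F (fun _ => 0) = 0) (K21 : F (fun _ => 1) = 1)
  (K3 : forall x i j, unitv x -> i != j ->
    ~ (F (upd (upd x i 0) j 0) < F (upd (upd x i 1) j 0) /\
       F (upd (upd x i 0) j 0) < F (upd (upd x i 0) j 1)) /\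
    ~ (F (upd (upd x i 1) j 0) < F (upd (upd x i 1) j 1) /\
       F (upd (upd x i 0) j 1) < F (upd (upd x i 1) j 1))) :
  exists i, forall x, unitv x -> F x = x i.
Proof.
have u0 : unitv (fun _ : 'I_n => 0 : R) by move=> k; apply: in01_0.
have u1 : unitv (fun _ : 'I_n => 1 : R) by move=> k; apply: in01_1.
case: (classic (exists i x, unitv x /\ F (upd x i 0) < F (upd x i 1))).
  case=> i [x [ux hlt]]; exists i.
  have B : forall y, unitv y -> F (upd y i 0) = F (upd x i 0) /\ F (upd y i 1) = F (upd x i 1).
    move=> y uy.
    pose Q := fun z : 'I_n -> R => unitv z /\ F (upd z i 0) = F (upd x i 0) /\
                                 F (upd z i 1) = F (upd x i 1).
    suff : Q y by case=> _.
    apply: (coord_ind (x := x)) => [|z j [uz [e0 e1]]]; first by split.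
    split; first by apply: unitv_upd.
    have [-> | hij] := eqVneq j i; first by rewrite !upd_upd.
    have hz : F (upd z i 0) < F (upd z i 1) by rewrite e0 e1.
    have hij' : i != j by rewrite eq_sym.
    have [f0 f1] := stepA K1 K3 uz hij' (uy j) hz.
    by rewrite f0 f1.
  have [l0 h1] := B _ u0; have [l0' h1'] := B _ u1.
  have c0 : upd (fun _ : 'I_n => 0 : R) i 0 = (fun _ => 0).
    by apply: functional_extensionality => k; rewrite /upd; case: eqP.
  have c1 : upd (fun _ : 'I_n => 1 : R) i 1 = (fun _ => 1).
    by apply: functional_extensionality => k; rewrite /upd; case: eqP.
  rewrite c0 K20 in l0; rewrite c1 K21 in h1'.
  move=> y uy; have [e0 e1] := B _ uy.
  have := K1 y i uy; rewrite e0 e1 -l0 -h1' => -[g1 g2 g3 g4].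
  have [y0 y1] := andP (uy i).
  case: (ltrgtP (y i) (F y)) => h; [have := g3 h | have := g4 h | by []]; lra.
move=> NE.
have st : forall z j v, unitv z -> 0 <= v <= 1 -> F (upd z j v) = F z.
  move=> z j v uz hv.
  have eq : F (upd z j 0) = F (upd z j 1).
    have [c1 c2 _ _] := K1 z j uz.
    case: (ltrgtP (F (upd z j 0)) (F (upd z j 1))) => // h; last by lra.
    by exfalso; apply: NE; exists j, z.
  have [c1 c2 _ _] := K1 z j uz.
  have [d1 d2 _ _] := K1 (upd z j v) j (unitv_upd j uz hv).
  rewrite !upd_upd in d1 d2; lra.
pose Q := fun z : 'I_n -> R => unitv z /\ F z = 0.
suff [_] : Q (fun _ => 1) by rewrite K21 => /eqP; rewrite oner_eq0.
apply: (coord_ind (x := fun _ => 0)) => [|z j [uz e]]; first by split.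
split; first by apply: unitv_upd => //; apply: in01_1.
by rewrite st //; apply: in01_1.
Qed.

Definition o1 M : 'I_M.+4 := @Ordinal M.+4 1%N isT.
Definition o2 M : 'I_M.+4 := @Ordinal M.+4 2%N isT.

Lemma mass1 (R : realType) M (p : prob R M.+4) : p (o1 M) = cdf p (o1 M) - cdf p ord0.
Proof. by rewrite massE. Qed.
Lemma mass2 (R : realType) M (p : prob R M.+4) : p (o2 M) = cdf p (o2 M) - cdf p (o1 M).
Proof. by rewrite massE. Qed.

Lemma L1_diff (R : realType) M (p p' q : prob R M.+4) :
  (forall j : nat, j != 1%N -> cdfn p j = cdfn p' j) ->
  L1dist p q - L1dist p' q =
  (`|p (o1 M) - q (o1 M)| + `|p (o2 M) - q (o2 M)|) -
  (`|p' (o1 M) - q (o1 M)| + `|p' (o2 M) - q (o2 M)|).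
Proof.
move=> h.
have e : forall k : 'I_M.+4, k != o1 M -> k != o2 M -> p k = p' k.
  move=> [kk hk] h1 h2.
  have {h1}h1 : kk != 1%N by apply/eqP => e1; move/eqP: h1; apply; apply: val_inj.
  have {h2}h2 : kk != 2%N by apply/eqP => e1; move/eqP: h2; apply; apply: val_inj.
  rewrite (massE p) (massE p') /= (h kk h1).
  case: ifP => // hk0; rewrite h //; move/negbT: hk0; lia.
have ne : o1 M != o2 M by rewrite -val_eqE.
rewrite /L1dist (bigD1 (o1 M)) // [X in _ + X - _](bigD1 (o2 M)) //=.
rewrite [X in _ - X](bigD1 (o1 M)) // [X in _ - (_ + X)](bigD1 (o2 M)) //=.
rewrite (eq_bigr (fun k => `|p' k - q k|)); last first.
  by move=> k /andP [h1 h2]; rewrite e.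
lra.
Qed.

Definition prof (R : realType) n M (x : 'I_n -> R) (i j : 'I_n) (qi qj : prob R M.+4) :
  'I_n -> prob R M.+4 := upd (upd (fun k => tp M (x k)) i qi) j qj.

Lemma prof_dev (R : realType) n M (x : 'I_n -> R) i j (qi qj q : prob R M.+4) :
  i != j -> upd (prof x i j qi qj) i q = prof x i j q qj.
Proof. by move=> hij; rewrite /prof (upd_comm _ _ _ (_ : j != i)) ?upd_upd // eq_sym. Qed.

Lemma prof_i (R : realType) n M (x : 'I_n -> R) i j (qi qj : prob R M.+4) :
  i != j -> prof x i j qi qj i = qi.
Proof. by move=> hij; rewrite /prof upd_neq ?upd_eq // eq_sym. Qed.

Lemma cdfn_ord (R : realType) m (p : prob R m) (a : 'I_m) : cdfn p a = cdf p a.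
Proof. by []. Qed.

Lemma out_cdf (R : realType) n M (psi : PAF R n M.+4) (hL : level_SP psi)
  (hC : certainty_preserving psi) x i j (qi qj : prob R M.+4) (a : 'I_M.+4) :
  unitv x -> (a < M.+3)%N ->
  cdf (psi (prof x i j qi qj)) a = Phi psi (upd (upd x i (cdf qi a)) j (cdf qj a)).
Proof.
move=> ux ha; rewrite phi_rep //; congr Phi.
apply: functional_extensionality => k; rewrite /prof /upd.
case: eqP => // _; case: eqP => // _.
by rewrite cdf_tp // c01_id.
Qed.

Lemma cdfn_levels (R : realType) M (p p' : prob R M.+4) :
  (forall a : 'I_M.+4, (a < M.+3)%N -> (a != 1%N :> nat) -> cdf p a = cdf p' a) ->
  forall j : nat, j != 1%N -> cdfn p j = cdfn p' j.
Proof.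
move=> h j hj.
case: (ltnP j M.+3) => hjM.
  have hj4 : (j < M.+4)%N by lia.
  exact: (h (Ordinal hj4)).
by rewrite !cdfn_big.
Qed.

Lemma cdf_mk4_0 (R : realType) M (y0 y1 y2 : R) :
  0 <= y0 -> y0 <= y1 -> y1 <= y2 -> y2 <= 1 -> cdf (mk4 M y0 y1 y2) ord0 = y0.
Proof. by move=> h0 h1 h2 h3; rewrite cdf_mk4 /cdfw /=; case: (z_id h0 h1 h2 h3). Qed.
Lemma cdf_mk4_1 (R : realType) M (y0 y1 y2 : R) :
  0 <= y0 -> y0 <= y1 -> y1 <= y2 -> y2 <= 1 -> cdf (mk4 M y0 y1 y2) (o1 M) = y1.
Proof. by move=> h0 h1 h2 h3; rewrite cdf_mk4 /cdfw /=; case: (z_id h0 h1 h2 h3). Qed.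
Lemma cdf_mk4_2 (R : realType) M (y0 y1 y2 : R) (a : 'I_M.+4) :
  0 <= y0 -> y0 <= y1 -> y1 <= y2 -> y2 <= 1 -> (2 <= a)%N -> (a < M.+3)%N ->
  cdf (mk4 M y0 y1 y2) a = y2.
Proof.
move=> h0 h1 h2 h3 *; rewrite cdf_mk4 /cdfw; case: (z_id h0 h1 h2 h3) => _ _ ->.
by repeat case: ifP => ?; try lia.
Qed.

Lemma clamp_mid (R : realType) (v l h g : R) : clampR v l h g -> l <= v -> v <= h -> g = v.
Proof.
case=> c1 c2 c3 c4 h1 h2.
case: (ltrgtP v g) => e; [have := c3 e | have := c4 e | by []]; lra.
Qed.
Lemma clamp_lo (R : realType) (v l h g : R) : clampR v l h g -> v <= l -> g = l.
Proof.
case=> c1 c2 c3 c4 h1.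
case: (ltrgtP v g) => e; [have := c3 e | have := c4 e | idtac]; lra.
Qed.
Lemma clamp_hi (R : realType) (v l h g : R) : clampR v l h g -> h <= v -> g = h.
Proof.
case=> c1 c2 c3 c4 h1.
case: (ltrgtP v g) => e; [have := c3 e | have := c4 e | idtac]; lra.
Qed.

Lemma Phi_bnd (R : realType) n M (psi : PAF R n M.+4) x : 0 <= Phi psi x <= 1.
Proof. by apply/andP; split; [apply: cdf_ge0 | apply: cdf_le1]. Qed.

Lemma clampJ (R : realType) n M (psi : PAF R n M.+4) (hL : level_SP psi) x i j (al be : R) :
  unitv x -> 0 <= al <= 1 -> 0 <= be <= 1 -> i != j ->
  clampR be (Phi psi (upd (upd x i al) j 0)) (Phi psi (upd (upd x i al) j 1))
            (Phi psi (upd (upd x i al) j be)).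
Proof.
move=> ux ha hb hij.
have := phi_clamp hL j (unitv_upd j (unitv_upd i ux ha) hb).
by rewrite !upd_upd upd_eq.
Qed.

Lemma clampI (R : realType) n M (psi : PAF R n M.+4) (hL : level_SP psi) x i j (al be : R) :
  unitv x -> 0 <= al <= 1 -> 0 <= be <= 1 -> i != j ->
  clampR al (Phi psi (upd (upd x i 0) j be)) (Phi psi (upd (upd x i 1) j be))
            (Phi psi (upd (upd x i al) j be)).
Proof.
move=> ux ha hb hij.
have ji : j != i by rewrite eq_sym.
have := phi_clamp hL i (unitv_upd j (unitv_upd i ux ha) hb).
by rewrite !(upd_comm _ _ _ ji) !upd_upd upd_neq // upd_eq.
Qed.

Lemma abs_ge (R : realType) (x : R) : x <= `|x| /\ - x <= `|x|.
Proof. by split; [apply: ler_norm | rewrite -normrN; apply: ler_norm]. Qed.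
Lemma abs_lt (R : realType) (x y : R) : - y < x -> x < y -> `|x| < y.
Proof. by move=> h1 h2; rewrite ltr_norml h1 h2. Qed.
Lemma abs_le (R : realType) (x y : R) : - y <= x -> x <= y -> `|x| <= y.
Proof. by move=> h1 h2; rewrite ler_norml h1 h2. Qed.

Lemma in01 (R : realType) (v : R) : 0 <= v -> v <= 1 -> 0 <= v <= 1.
Proof. by move=> h1 h2; apply/andP. Qed.

Lemma K3a (R : realType) n M (psi : PAF R n M.+4) (hL : level_SP psi)
  (hC : certainty_preserving psi) (hL1 : L1_SP psi) x i j :
  unitv x -> i != j ->
  ~ (Phi psi (upd (upd x i 0) j 0) < Phi psi (upd (upd x i 1) j 0) /\
     Phi psi (upd (upd x i 0) j 0) < Phi psi (upd (upd x i 0) j 1)).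
Proof.
move=> ux hij [hab hac].
have [a0 a1] := andP (Phi_bnd psi (upd (upd x i 0) j 0)).
have [b0 b1] := andP (Phi_bnd psi (upd (upd x i 1) j 0)).
have [c0 c1] := andP (Phi_bnd psi (upd (upd x i 0) j 1)).
move: hab hac a0 a1 b0 b1 c0 c1.
set a := Phi psi (upd (upd x i 0) j 0); set b := Phi psi (upd (upd x i 1) j 0).
set c := Phi psi (upd (upd x i 0) j 1).
move=> hab hac a0 a1 b0 b1 c0 c1.
have [t [ht1 ht2 ht3]] : exists t, [/\ a < t, t <= b & t <= c].
  by case: (lerP b c) => h; [exists b | exists c]; split; lra.
have [s [hs1 hs2]] : exists s, a < s /\ s < t by exists ((a + t) / 2); split; lra.
have u0 := in01_0 R; have u1 := in01_1 R.
have us : 0 <= s <= 1 by apply: in01; lra.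
have ut : 0 <= t <= 1 by apply: in01; lra.
have V0 : Phi psi (upd (upd x i 0) j s) = s.
  by apply: (clamp_mid (clampJ hL ux u0 us hij)); rewrite -/a -/c; lra.
have Vb : Phi psi (upd (upd x i 1) j s) = b.
  by apply: (clamp_lo (clampJ hL ux u1 us hij)); rewrite -/b; lra.
have V1 : forall al, s <= al -> al <= b -> Phi psi (upd (upd x i al) j s) = al.
  move=> al h1 h2; have ua : 0 <= al <= 1 by apply: in01; lra.
  by apply: (clamp_mid (clampI hL ux ua us hij)); rewrite ?V0 ?Vb.
have V2 : forall al, 0 <= al -> al <= c -> Phi psi (upd (upd x i al) j 1) = c.
  move=> al h1 h2; have ua : 0 <= al <= 1 by apply: in01; lra.
  by apply: (clamp_lo (clampI hL ux ua u1 hij)); rewrite -/c.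
have hqi : [/\ (0 : R) <= 0, (0 : R) <= s, s <= s & s <= 1] by split; lra.
have hqj : [/\ (0 : R) <= s, s <= s, s <= 1 & (1 : R) <= 1] by split; lra.
have hqi' : [/\ (0 : R) <= 0, (0 : R) <= t, t <= t & t <= 1] by split; lra.
case: hqi => qa qb qc qd; case: hqj => ja jb jc jd; case: hqi' => pa pb pc pd.
have L := hL1 i (prof x i j (mk4 M 0 s s) (mk4 M s s 1)) (mk4 M 0 t t).
rewrite prof_dev // prof_i // in L.
set O := psi (prof x i j (mk4 M 0 s s) (mk4 M s s 1)) in L *.
set O' := psi (prof x i j (mk4 M 0 t t) (mk4 M s s 1)) in L *.
have cO0 : cdf O ord0 = s.
  by rewrite /O out_cdf // (@cdf_mk4_0 R M 0 s s) // (@cdf_mk4_0 R M s s 1) // V0.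
have cO1 : cdf O (o1 M) = s.
  rewrite /O out_cdf // (@cdf_mk4_1 R M 0 s s) // (@cdf_mk4_1 R M s s 1) // V1 //; lra.
have cO2 : forall a : 'I_M.+4, (2 <= a)%N -> (a < M.+3)%N -> cdf O a = c.
  move=> a' h1 h2; rewrite /O out_cdf //.
  by rewrite (@cdf_mk4_2 R M 0 s s) // (@cdf_mk4_2 R M s s 1) // V2 //; lra.
have cP0 : cdf O' ord0 = s.
  by rewrite /O' out_cdf // (@cdf_mk4_0 R M 0 t t) // (@cdf_mk4_0 R M s s 1) // V0.
have cP1 : cdf O' (o1 M) = t.
  rewrite /O' out_cdf // (@cdf_mk4_1 R M 0 t t) // (@cdf_mk4_1 R M s s 1) // V1 //; lra.
have cP2 : forall a : 'I_M.+4, (2 <= a)%N -> (a < M.+3)%N -> cdf O' a = c.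
  move=> a' h1 h2; rewrite /O' out_cdf //.
  by rewrite (@cdf_mk4_2 R M 0 t t) // (@cdf_mk4_2 R M s s 1) // V2 //; lra.
have E : forall jj : nat, jj != 1%N -> cdfn O jj = cdfn O' jj.
  apply: cdfn_levels => a' h1 h2.
  case: (eqVneq (a' : nat) 0%N) => h0.
    have -> : a' = ord0 by apply: val_inj.
    by rewrite cO0 cP0.
  have h3 : (2 <= a')%N by move: h0 h2; case: (nat_of_ord a') => [|[|k]].
  by rewrite cO2 ?cP2.
have D := L1_diff (mk4 M 0 s s) E.
move: D; rewrite !mass1 !mass2 cO0 cO1 cP0 cP1 !cO2 ?cP2 //.
rewrite (@cdf_mk4_0 R M 0 s s) // (@cdf_mk4_1 R M 0 s s) // (@cdf_mk4_2 R M 0 s s (o2 M)) // => D.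
have [_ e1] := abs_ge ((s - s) - (s - 0)).
have [e2 _] := abs_ge ((c - s) - (s - s)).
have e3 : `|(t - s) - (s - 0)| < t by apply: abs_lt; lra.
have e4 : `|(c - t) - (s - s)| <= c - t by apply: abs_le; lra.
lra.
Qed.

Lemma K3b (R : realType) n M (psi : PAF R n M.+4) (hL : level_SP psi)
  (hC : certainty_preserving psi) (hL1 : L1_SP psi) x i j :
  unitv x -> i != j ->
  ~ (Phi psi (upd (upd x i 1) j 0) < Phi psi (upd (upd x i 1) j 1) /\
     Phi psi (upd (upd x i 0) j 1) < Phi psi (upd (upd x i 1) j 1)).
Proof.
move=> ux hij [hbd hcd].
have [a0 a1] := andP (Phi_bnd psi (upd (upd x i 0) j 0)).
have [b0 b1] := andP (Phi_bnd psi (upd (upd x i 1) j 0)).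
have [c0 c1] := andP (Phi_bnd psi (upd (upd x i 0) j 1)).
have [d0 d1] := andP (Phi_bnd psi (upd (upd x i 1) j 1)).
move: hbd hcd a0 a1 b0 b1 c0 c1 d0 d1.
set a := Phi psi (upd (upd x i 0) j 0); set b := Phi psi (upd (upd x i 1) j 0).
set c := Phi psi (upd (upd x i 0) j 1); set d := Phi psi (upd (upd x i 1) j 1).
move=> hbd hcd a0 a1 b0 b1 c0 c1 d0 d1.
have hab : a <= b.
  by have [] := clampI hL ux (in01_0 R) (in01_0 R) hij; rewrite -/a -/b.
have [t [ht1 ht2 ht3]] : exists t, [/\ t < d, b <= t & c <= t].
  by case: (lerP b c) => h; [exists c | exists b]; split; lra.
have [s [hs1 hs2]] : exists s, t < s /\ s < d by exists ((t + d) / 2); split; lra.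
have u0 := in01_0 R; have u1 := in01_1 R.
have us : 0 <= s <= 1 by apply: in01; lra.
have ut : 0 <= t <= 1 by apply: in01; lra.
have W0 : forall al, b <= al -> al <= 1 -> Phi psi (upd (upd x i al) j 0) = b.
  move=> al h1 h2; have ua : 0 <= al <= 1 by apply: in01; lra.
  by apply: (clamp_hi (clampI hL ux ua u0 hij)); rewrite -/b.
have Wc : Phi psi (upd (upd x i 0) j s) = c.
  by apply: (clamp_hi (clampJ hL ux u0 us hij)); rewrite -/c; lra.
have Ws : Phi psi (upd (upd x i 1) j s) = s.
  by apply: (clamp_mid (clampJ hL ux u1 us hij)); rewrite -/b -/d; lra.
have W1 : forall al, c <= al -> al <= s -> Phi psi (upd (upd x i al) j s) = al.
  move=> al h1 h2; have ua : 0 <= al <= 1 by apply: in01; lra.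
  by apply: (clamp_mid (clampI hL ux ua us hij)); rewrite ?Wc ?Ws.
have hqi : [/\ (0 : R) <= s, s <= s, s <= 1 & (1 : R) <= 1] by split; lra.
have hqj : [/\ (0 : R) <= 0, (0 : R) <= s, s <= s & s <= 1] by split; lra.
have hqi' : [/\ (0 : R) <= t, t <= t, t <= 1 & (1 : R) <= 1] by split; lra.
case: hqi => qa qb qc qd; case: hqj => ja jb jc jd; case: hqi' => pa pb pc pd.
have L := hL1 i (prof x i j (mk4 M s s 1) (mk4 M 0 s s)) (mk4 M t t 1).
rewrite prof_dev // prof_i // in L.
set O := psi (prof x i j (mk4 M s s 1) (mk4 M 0 s s)) in L *.
set O' := psi (prof x i j (mk4 M t t 1) (mk4 M 0 s s)) in L *.
have cO0 : cdf O ord0 = b.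
  rewrite /O out_cdf // (@cdf_mk4_0 R M s s 1) // (@cdf_mk4_0 R M 0 s s) // W0 //; lra.
have cO1 : cdf O (o1 M) = s.
  rewrite /O out_cdf // (@cdf_mk4_1 R M s s 1) // (@cdf_mk4_1 R M 0 s s) // W1 //; lra.
have cO2 : forall a : 'I_M.+4, (2 <= a)%N -> (a < M.+3)%N -> cdf O a = s.
  move=> a' h1 h2; rewrite /O out_cdf //.
  by rewrite (@cdf_mk4_2 R M s s 1) // (@cdf_mk4_2 R M 0 s s) // Ws.
have cP0 : cdf O' ord0 = b.
  rewrite /O' out_cdf // (@cdf_mk4_0 R M t t 1) // (@cdf_mk4_0 R M 0 s s) // W0 //; lra.
have cP1 : cdf O' (o1 M) = t.
  rewrite /O' out_cdf // (@cdf_mk4_1 R M t t 1) // (@cdf_mk4_1 R M 0 s s) // W1 //; lra.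
have cP2 : forall a : 'I_M.+4, (2 <= a)%N -> (a < M.+3)%N -> cdf O' a = s.
  move=> a' h1 h2; rewrite /O' out_cdf //.
  by rewrite (@cdf_mk4_2 R M t t 1) // (@cdf_mk4_2 R M 0 s s) // Ws.
have E : forall jj : nat, jj != 1%N -> cdfn O jj = cdfn O' jj.
  apply: cdfn_levels => a' h1 h2.
  case: (eqVneq (a' : nat) 0%N) => h0.
    have -> : a' = ord0 by apply: val_inj.
    by rewrite cO0 cP0.
  have h3 : (2 <= a')%N by move: h0 h2; case: (nat_of_ord a') => [|[|k]].
  by rewrite cO2 ?cP2.
have D := L1_diff (mk4 M s s 1) E.
move: D; rewrite !mass1 !mass2 cO0 cO1 cP0 cP1 !cO2 ?cP2 //.
rewrite (@cdf_mk4_0 R M s s 1) // (@cdf_mk4_1 R M s s 1) // (@cdf_mk4_2 R M s s 1 (o2 M)) // => D.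
have [e1 _] := abs_ge ((s - b) - (s - s)).
have [_ e2] := abs_ge ((s - s) - (1 - s)).
have e3 : `|(t - b) - (s - s)| <= t - b by apply: abs_le; lra.
have e4 : `|(s - t) - (1 - s)| < 1 - t by apply: abs_lt; lra.
lra.
Qed.

Theorem mainTheorem16 (R : realType) (n m : nat) (psi : PAF R n m) :
  (4 <= m)%N -> certainty_preserving psi ->
  ((level_SP psi /\ L1_SP psi) <-> dictatorial psi).
Proof.
move=> hm hC; split.
  case=> hL hL1.
  move: psi hC hL hL1; case: m hm => [|[|[|[|M]]]] // _ psi hC hL hL1.
  have K1 : forall x i, unitv x -> clampR (x i) (Phi psi (upd x i 0)) (Phi psi (upd x i 1)) (Phi psi x).
    by move=> x i ux; apply: phi_clamp.
  have K3 := fun x i j ux hij => conj (K3a hL hC hL1 (x := x) (i := i) (j := j) ux hij)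
                                      (K3b hL hC hL1 (x := x) (i := i) (j := j) ux hij).
  have [i hi] := dict_comb K1 (phi_const0 hC) (phi_const1 hC) K3.
  exists i => P; apply: prob_ext.
  have ce : forall jj, cdfn (psi P) jj = cdfn (P i) jj.
    move=> jj; case: (ltnP jj M.+3) => hj; last by rewrite !cdfn_big.
    have hj4 : (jj < M.+4)%N by lia.
    rewrite !(cdfn_ord _ (Ordinal hj4)) phi_rep // hi //.
    by move=> k; apply/andP; split; [apply: cdf_ge0 | apply: cdf_le1].
  by move=> k; rewrite (massE (psi P)) (massE (P i)) !ce.
case=> i0 hd; split.
  move=> j P pi' a; rewrite !hd.
  have [-> | hj] := eqVneq j i0.
    by rewrite upd_eq; split => h; exfalso; move: h; rewrite ltxx.
  by rewrite upd_neq 1?eq_sym //; split => _; apply: lexx.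
move=> j P pi'; rewrite !hd.
have [-> | hj] := eqVneq j i0.
  rewrite /L1dist big1 => [|k _]; last by rewrite subrr normr0.
  by apply: sumr_ge0 => k _; apply: normr_ge0.
by rewrite upd_neq 1?eq_sym.
Qed.
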